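(* Let $A$ be a symmetric nonnegative $r$-matrix of order $n$ and let $p>1$. If $\lambda\in\mathbb{R}$ and $\mathbf{x}=(x_1,\ldots,x_n)\in\mathbb{S}^{n-1}_p$ satisfy \[ \lambda x_k|x_k|^{p-2}=\frac1r\frac{\partial P_A(\mathbf{x})}{\partial x_k},\qquad k=1,\ldots,n, \] then $|\lambda|\leq\eta^{(p)}(A)$.
   Context: A cubical $r$-matrix of order $n$ is a function $A$ on $[n]^r$ with entries $a_{i_1,\ldots,i_r}$; symmetric means invariant under permutations of indices. $P_A(\mathbf{x})=\sum_{i_1,\ldots,i_r}a_{i_1,\ldots,i_r}x_{i_1}\cdots x_{i_r}$. $\mathbb{S}^{n-1}_p=\{\mathbf{x}\in\mathbb{R}^n:\sum|x_i|^p=1\}$ and $\eta^{(p)}(A)=\max\{|P_A(\mathbf{x})|:\mathbf{x}\in\mathbb{S}^{n-1}_p\}$. The expression $x_k|x_k|^{p-2}$ is interpreted as $0$ when $x_k=0$. *)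

(* Defs.v *)
From HB Require Import structures.
From mathcomp Require Import all_boot all_order all_algebra all_fingroup.
From mathcomp Require Import all_classical all_reals all_analysis.
Set Implicit Arguments. Unset Strict Implicit. Unset Printing Implicit Defensive.
Import Order.TTheory GRing.Theory Num.Theory.
Import numFieldNormedType.Exports.
Local Open Scope classical_set_scope.
Local Open Scope ring_scope.

(* A cubical r-matrix of order n over R: a function on [n]^r, where a
   multi-index (i_1,...,i_r) is a function 'I_r -> 'I_n. *)
Definition cubmx (R : Type) (r n : nat) := {ffun 'I_r -> 'I_n} -> R.

Definition symmetric_cubmx (R : Type) (r n : nat) (A : cubmx R r n) : Prop :=
  forall (s : 'S_r) (i : {ffun 'I_r -> 'I_n}), A [ffun j => i (s j)] = A i.

Definition nonneg_cubmx (R : numDomainType) (r n : nat) (A : cubmx R r n) : Prop :=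
  forall i, 0 <= A i.

Definition PA (R : numDomainType) (r n : nat) (A : cubmx R r n) (x : 'rV[R]_n) : R :=
  \sum_(i : {ffun 'I_r -> 'I_n}) A i * \prod_(j < r) x 0 (i j).

Definition lp_sphere (R : realType) (n : nat) (p : R) : set 'rV[R]_n :=
  [set x | \sum_(k < n) `|x 0 k| `^ p = 1].

(* eta^(p)(A) = max { |P_A(x)| : x in S_p^{n-1} } (the max exists by
   compactness; we take the supremum) *)
Definition eta_p (R : realType) (r n : nat) (p : R) (A : cubmx R r n) : R :=
  sup [set `|PA A x| | x in @lp_sphere R n p].

Definition partial (R : realType) (n : nat) (f : 'rV[R]_n -> R) (k : 'I_n)
  (x : 'rV[R]_n) : R := 'D_(delta_mx 0 k) f x.

(* Main.v *)
Require Import Defs.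
From HB Require Import structures.
From mathcomp Require Import all_boot all_order all_algebra all_fingroup.
From mathcomp Require Import all_classical all_reals all_analysis.
From mathcomp Require Import ring.
Import Order.TTheory GRing.Theory Num.Theory.
Import numFieldNormedType.Exports.
Local Open Scope classical_set_scope.
Local Open Scope ring_scope.

Section D.
Variables (R : realType) (n : nat).

Lemma is_derive_coord (x v : 'rV[R]_n) (m : 'I_n) :
  is_derive x v (fun y : 'rV[R]_n => y 0 m) (v 0 m).
Proof.
have H : \forall h \near (0:R)^', h^-1 *: ((h *: v + x) 0 m - x 0 m) = v 0 m.
  near=> h.
  have h0 : h != 0 by near: h; exact: nbhs_dnbhs_neq.
  rewrite !mxE addrK /=. by rewrite [_ *: _]mulrA mulVf // mul1r.
split.
  by apply: (is_cvg_near_cst (v 0 m)).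
by apply/lim_near_cst.
Unshelve. all: by end_near. Qed.

Fixpoint Dp (x v : 'rV[R]_n) (s : seq 'I_n) : R :=
  match s with
  | [::] => 0
  | m :: s' => x 0 m * Dp x v s' + (\prod_(j <- s') x 0 j) * v 0 m
  end.

Lemma is_derive_prod (x v : 'rV[R]_n) (s : seq 'I_n) :
  is_derive x v (fun y : 'rV[R]_n => \prod_(j <- s) y 0 j) (Dp x v s).
Proof.
elim: s => [|m s IH] /=.
  under eq_fun do rewrite big_nil.
  by rewrite -/(cst 1); apply: is_derive_cst.
under eq_fun do rewrite big_cons.
have := is_deriveM (is_derive_coord x v m) IH.
by move=> H; apply: is_derive_eq.
Qed.

Lemma euler_prod (x : 'rV[R]_n) (s : seq 'I_n) :
  \sum_(k < n) x 0 k * Dp x (delta_mx 0 k) s = (size s)%:R * \prod_(j <- s) x 0 j.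
Proof.
elim: s => [|m s IH] /=.
  by rewrite big1 ?mul0r // => k _; rewrite mulr0.
rewrite big_cons.
under eq_bigr do rewrite mulrDr.
rewrite big_split /=.
under eq_bigr do rewrite mulrCA.
rewrite -mulr_sumr IH.
have -> : \sum_(k < n) x 0 k * (\prod_(j <- s) x 0 j * (delta_mx 0 k : 'rV[R]_n) 0 m)
    = x 0 m * \prod_(j <- s) x 0 j.
  rewrite (bigD1 m) //= [X in _ + X]big1 ?addr0; last first.
    by move=> k km; rewrite mxE eqxx /= eq_sym (negbTE km) /= !mulr0.
  by rewrite mxE !eqxx /= mulr1.
rewrite mulrSr; ring.
Qed.

Lemma is_derive_sumseq (I : eqType) (s : seq I) (F : I -> 'rV[R]_n -> R)
  (dF : I -> R) (x v : 'rV[R]_n) :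
  (forall i, is_derive x v (F i) (dF i)) ->
  is_derive x v (fun y => \sum_(i <- s) F i y) (\sum_(i <- s) dF i).
Proof.
move=> H; elim: s => [|a s IH] /=.
  under eq_fun do rewrite big_nil.
  by rewrite big_nil -/(cst (0:R)); apply: is_derive_cst.
under eq_fun do rewrite big_cons.
rewrite big_cons.
exact: (is_deriveD (H a) IH).
Qed.

Lemma abs_le1 (p : R) (y : 'rV[R]_n) (m : 'I_n) : 1 < p ->
  \sum_(k < n) `|y 0 k| `^ p = 1 -> `|y 0 m| <= 1.
Proof.
move=> p1 hs; rewrite leNgt; apply/negP => hy.
have h1 : `|y 0 m| <= `|y 0 m| `^ p.
  by apply: le1r_powR; [exact: ltW | exact: ltW].
have h2 : `|y 0 m| `^ p <= 1.
  rewrite -hs (bigD1 m) //= lerDl; apply: sumr_ge0 => k _; exact: powR_ge0.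
by have := le_lt_trans (le_trans h1 h2) hy; rewrite ltxx.
Qed.

End D.
Arguments Dp {R n}.
Arguments is_derive_prod {R n}.
Arguments euler_prod {R n}.
Arguments abs_le1 {R n p y m}.

Theorem proposition9 (R : realType) (r n : nat) (A : cubmx R r n) (p : R)
  (lambda : R) (x : 'rV[R]_n) :
  symmetric_cubmx A -> nonneg_cubmx A -> 1 < p ->
  x \in @lp_sphere R n p ->
  (forall k : 'I_n,
     lambda * (x 0 k * `|x 0 k| `^ (p - 2)) = r%:R^-1 * partial (PA A) k x) ->
  `|lambda| <= eta_p p A.
Proof.
move=> _ _ p1 xS Hk.
have xS' : \sum_(k < n) `|x 0 k| `^ p = 1 by move: xS; rewrite inE.
pose sq (i : {ffun 'I_r -> 'I_n}) := [seq i j | j <- enum 'I_r].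
have PAE : forall y, PA A y = \sum_i A i * \prod_(m <- sq i) y 0 m.
  move=> y; rewrite /PA; apply: eq_bigr => i _; congr (_ * _).
  by rewrite /sq big_map big_enum.
have Hd : forall k, partial (PA A) k x =
    \sum_i A i * Dp x (delta_mx 0 k) (sq i).
  move=> k; rewrite /partial.
  have -> : PA A = fun y => \sum_(i <- index_enum _) (fun i y => A i * \prod_(m <- sq i) y 0 m) i y.
    by apply/funext => y; rewrite PAE.
  apply: derive_val; apply: is_derive_sumseq => i.
  have H := is_deriveZ (A i) (is_derive_prod x (delta_mx 0 k) (sq i)).
  exact: H.
have Heul : \sum_k x 0 k * partial (PA A) k x = r%:R * PA A x.
  under eq_bigr do rewrite Hd mulr_sumr.
  rewrite exchange_big PAE mulr_sumr; apply: eq_bigr => i _.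
  under eq_bigr do rewrite mulrCA.
  rewrite -mulr_sumr euler_prod /sq size_map size_enum_ord; ring.
have Hpow : forall k, x 0 k * (x 0 k * `|x 0 k| `^ (p - 2)) = `|x 0 k| `^ p.
  move=> k; have [->|xk0] := eqVneq (x 0 k) 0.
    by rewrite mul0r normr0 powR0 // gt_eqF // (lt_trans ltr01 p1).
  rewrite mulrA -expr2 -real_normK ?num_real //.
  rewrite expr2 -mulrA.
  have -> : p - 2 = (p - 1) - 1 by ring.
  rewrite mulr_powRB1 ?normr_ge0 // ?subr_gt0 // mulr_powRB1 ?normr_ge0 //.
  by rewrite (lt_trans ltr01 p1).
have Hlam : lambda = r%:R^-1 * r%:R * PA A x.
  have : \sum_k x 0 k * (lambda * (x 0 k * `|x 0 k| `^ (p - 2))) =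
         \sum_k x 0 k * (r%:R^-1 * partial (PA A) k x).
    by apply: eq_bigr => k _; rewrite Hk.
  under eq_bigr do rewrite mulrCA Hpow.
  rewrite -mulr_sumr xS' mulr1 => ->.
  under eq_bigr do rewrite mulrCA.
  by rewrite -mulr_sumr Heul mulrA.
have Hle : `|lambda| <= `|PA A x|.
  rewrite Hlam normrM; case: (posnP r) => [r0|r0].
    have -> : r%:R^-1 * r%:R = 0 :> R by rewrite r0 invr0 mul0r.
    by rewrite normr0 mul0r normr_ge0.
  by rewrite mulVf ?pnatr_eq0 -?lt0n // normr1 mul1r.
apply: (le_trans Hle); apply: ub_le_sup; last by exists x.
exists (\sum_i `|A i|) => _ [y yS <-].
have yS' : \sum_(k < n) `|y 0 k| `^ p = 1 by exact: yS.
rewrite /PA; apply: (le_trans (ler_norm_sum _ _ _)); apply: ler_sum => i _.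
rewrite normrM -[leRHS]mulr1; apply: ler_wpM2l; first exact: normr_ge0.
rewrite normr_prod; apply: prodr_ile1 => j _.
by rewrite normr_ge0 (abs_le1 p1 yS').
Qed.
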